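(* Let $y_0\in E$ and let $u$ be a positive solution of $0=\tfrac12b^2u''+\tilde au'+\eta u-u^2-d\frac{(u')^2}{u}$ on $[y_0,\infty)$ with $u(y)/\eta(y)\to1$ as $y\to\infty$ and $u\le\eta$ for all sufficiently large $y$. Assume that on $[y_0,\infty)$, $\eta\in C^2$, $\eta>0$, $\bar a:=\frac{\tilde a}{\eta}+(b^2-2d)\frac{\eta'}{\eta^2}\le0$, and that $\Psi\eta$ is increasing and concave on $[y_0,\infty)$. Then $u\le\eta\,\Psi\eta$ for all sufficiently large $y$.
   Context: $E=(E_-,\infty)$ with $E_-\in\{-\infty\}\cup\mathbb R$. $r,\lambda,\sigma,a,b,\rho,\delta:E\to\mathbb R$ are locally Lipschitz with $\sigma>0$, $b(y)\neq0$, $\rho(y)\in[-1,1]$; $R\in(0,\infty)\setminus\{1\}$. Define $\eta=\frac1R\big(\delta-(1-R)(r+\frac{\lambda^2}{2R})\big)$, $\tilde a=a+\frac{1-R}{R}\rho\lambda b$, $d=\frac12b^2((1-\rho^2)R+\rho^2+1)$, and for positive $g\in C^2$, $\Psi g=1+\frac{\frac12b^2g''+\tilde ag'}{g^2}-d\frac{(g')^2}{g^3}$. *)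

(* Defs.v *)
From Stdlib Require Import Reals.
From Coquelicot Require Import Coquelicot.
Open Scope R_scope.

(* The state space E = (E_-, oo) with E_- in {-oo} \cup R;
   None encodes E_- = -oo, Some e encodes E_- = e. *)
Definition inE (Em : option R) (y : R) : Prop :=
  match Em with None => True | Some e => e < y end.

Definition loc_lipschitz_on (Em : option R) (f : R -> R) : Prop :=
  forall y, inE Em y -> exists eps L, 0 < eps /\
    forall x z, inE Em x -> inE Em z -> Rabs (x - y) < eps -> Rabs (z - y) < eps ->
      Rabs (f x - f z) <= L * Rabs (x - z).

Definition eta_fn (RR : R) (r lam delta : R -> R) (y : R) : R :=
  / RR * (delta y - (1 - RR) * (r y + (lam y) ^ 2 / (2 * RR))).

Definition atilde (RR : R) (a rho lam b : R -> R) (y : R) : R :=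
  a y + (1 - RR) / RR * rho y * lam y * b y.

Definition dfn (RR : R) (b rho : R -> R) (y : R) : R :=
  / 2 * (b y) ^ 2 * ((1 - (rho y) ^ 2) * RR + (rho y) ^ 2 + 1).

Definition Psi (b atl d g : R -> R) (y : R) : R :=
  1 + (/ 2 * (b y) ^ 2 * Derive_n g 2 y + atl y * Derive g y) / (g y) ^ 2
    - d y * (Derive g y) ^ 2 / (g y) ^ 3.

(* C^2 on [y0, oo) (two-sided derivatives; y0 lies in the open set E) *)
Definition C2_from (g : R -> R) (y0 : R) : Prop :=
  forall y, y0 <= y ->
    ex_derive g y /\ ex_derive (Derive g) y /\ continuous (Derive_n g 2) y.

Definition nondecreasing_from (f : R -> R) (y0 : R) : Prop :=
  forall x y, y0 <= x -> x <= y -> f x <= f y.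

Definition concave_from (f : R -> R) (y0 : R) : Prop :=
  forall x y t, y0 <= x -> y0 <= y -> 0 <= t <= 1 ->
    t * f x + (1 - t) * f y <= f (t * x + (1 - t) * y).

Definition eventually_le (f g : R -> R) : Prop :=
  exists Y, forall y, Y <= y -> f y <= g y.

(* Main.v *)
Require Import Defs.
From Stdlib Require Import Reals Lra Classical.
From Coquelicot Require Import Coquelicot.
Open Scope R_scope.

Lemma T1 (h : R -> R) w L : derivable_pt_lim h w L -> 0 < L ->
  exists d, 0 < d /\ forall t, 0 < t < d -> h w < h (w + t) /\ h (w - t) < h w.
Proof.
  intros H HL. destruct (H L HL) as [d Hd]. exists d. split; [apply (cond_pos d)|].
  intros t Ht. split.
  - assert (Hk := Hd t ltac:(lra) ltac:(rewrite Rabs_pos_eq; lra)).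
    apply Rabs_def2 in Hk. destruct Hk as [_ Hk].
    assert (0 < (h (w + t) - h w) / t) by lra.
    assert (0 < (h (w + t) - h w) / t * t) by (apply Rmult_lt_0_compat; lra).
    field_simplify in H1; lra.
  - assert (Hk := Hd (-t) ltac:(lra) ltac:(rewrite Rabs_Ropp, Rabs_pos_eq; lra)).
    apply Rabs_def2 in Hk. destruct Hk as [_ Hk].
    assert (0 < (h (w + - t) - h w) / - t) by lra.
    assert (0 < (h (w + - t) - h w) / - t * t) by (apply Rmult_lt_0_compat; lra).
    replace ((h (w + - t) - h w) / - t * t) with (h w - h (w - t)) in H1 by (unfold Rminus; field; lra).
    lra.
Qed.

Lemma T1n (h : R -> R) w L : derivable_pt_lim h w L -> L < 0 ->
  exists d, 0 < d /\ forall t, 0 < t < d -> h (w + t) < h w /\ h w < h (w - t).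
Proof.
  intros H HL. apply derivable_pt_lim_opp in H.
  destruct (T1 _ _ _ H ltac:(lra)) as [d [Hd H']]. exists d; split; auto.
  intros t Ht; specialize (H' t Ht). unfold opp_fct in H'. lra.
Qed.


Lemma abstract_main (y0 Y : R) (f f1 f2 psi : R -> R)
 (HY : y0 < Y)
 (Hf : forall y, y0 < y -> derivable_pt_lim f y (f1 y))
 (Hf1 : forall y, y0 < y -> derivable_pt_lim f1 y (f2 y))
 (Hpsi : forall y, y0 < y -> continuity_pt psi y)
 (Hfpos : forall y, y0 < y -> 0 < f y)
 (Hfle : forall y, Y <= y -> f y <= 1)
 (Hlim : forall e, 0 < e -> exists M, forall y, M < y -> 1 - e < f y)
 (KEY : forall y, y0 < y -> psi y < f y -> 0 <= f1 y -> 0 < f2 y)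
 (Hmon : nondecreasing_from psi y0)
 (Hconc : concave_from psi y0) :
 exists a, forall y, a <= y -> f y <= psi y.
Proof.
assert (contf : forall y, y0 < y -> continuity_pt f y).
{ intros y H. apply derivable_continuous_pt. exists (f1 y). apply Hf; auto. }
assert (contf1 : forall y, y0 < y -> continuity_pt f1 y).
{ intros y H. apply derivable_continuous_pt. exists (f2 y). apply Hf1; auto. }
assert (mvt : forall x z, y0 < x -> x < z -> exists c, f z - f x = f1 c * (z - x) /\ x < c < z).
{ intros x z H1 H2. apply MVT_cor2; auto. intros c Hc; apply Hf; lra. }
assert (mono : forall a, y0 < a -> (forall y, a <= y -> psi y < f y) ->
  forall c, a <= c -> 0 <= f1 c -> forall y, c <= y -> f1 c <= f1 y).
{ intros a Ha Hg c Hc H0 y Hy.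
  destruct (Rle_or_lt (f1 c) (f1 y)) as [|Hlt]; auto. exfalso.
  destruct (continuity_ab_maj f1 c y Hy) as [w [Hw1 Hw2]].
  { intros; apply contf1; lra. }
  assert (Hcw := Hw1 c ltac:(lra)).
  assert (w <> y) by (intro; subst; lra).
  assert (K := KEY w ltac:(lra) (Hg w ltac:(lra)) ltac:(lra)).
  destruct (T1 _ _ _ (Hf1 w ltac:(lra)) K) as [d [Hd Ht]].
  set (t := Rmin d (y - w) / 2).
  assert (0 < t < d). { unfold t. assert (Rmin d (y-w) <= d) by apply Rmin_l.
    assert (0 < Rmin d (y-w)) by (apply Rmin_pos; lra). lra. }
  assert (t <= y - w). { unfold t. assert (Rmin d (y-w) <= y - w) by apply Rmin_r.
    assert (0 < Rmin d (y-w)) by (apply Rmin_pos; lra). lra. }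
  destruct (Ht t H1). specialize (Hw1 (w + t) ltac:(lra)). lra. }
assert (blow : forall a, y0 < a -> Y <= a -> ~ (forall y, a <= y -> psi y < f y)).
{ intros a Ha HaY Hg.
  assert (Hc : exists c, a <= c /\ 0 <= f1 c).
  { apply NNPP; intro Hn.
    assert (Hneg : forall c, a <= c -> f1 c < 0).
    { intros c Hc. apply Rnot_le_lt. intro. apply Hn. eauto. }
    assert (Hdec : forall x z, a <= x -> x < z -> f z < f x).
    { intros x z Hx Hz. destruct (mvt x z ltac:(lra) Hz) as [c [Hc1 Hc2]].
      assert (f1 c < 0) by (apply Hneg; lra).
      assert (f1 c * (z - x) < 0) by nra. lra. }
    assert (H1 := Hdec a (a+1) ltac:(lra) ltac:(lra)).
    assert (H2 := Hfle a HaY).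
    destruct (Hlim (1 - f (a+1)) ltac:(lra)) as [M HM].
    set (z := Rmax M (a+1) + 1).
    assert (M <= Rmax M (a+1)) by apply Rmax_l.
    assert (a+1 <= Rmax M (a+1)) by apply Rmax_r.
    specialize (HM z ltac:(unfold z; lra)).
    specialize (Hdec (a+1) z ltac:(lra) ltac:(unfold z; lra)). lra. }
  destruct Hc as [c [Hc1 Hc2]].
  assert (K := KEY c ltac:(lra) (Hg c Hc1) Hc2).
  destruct (T1 _ _ _ (Hf1 c ltac:(lra)) K) as [d [Hd Ht]].
  destruct (Ht (d/2) ltac:(lra)) as [Hc' _].
  set (c' := c + d/2) in *.
  set (k := f1 c').
  assert (Hk : 0 < k) by (unfold k; lra).
  assert (Hm := mono a Ha Hg c' ltac:(unfold c'; lra) ltac:(unfold k in Hk; lra)).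
  destruct (mvt c' (c' + 2/k) ltac:(unfold c'; lra)) as [xi [Hxi1 Hxi2]].
  { assert (0 < 2/k) by (apply Rdiv_lt_0_compat; lra). lra. }
  assert (Hxk := Hm xi ltac:(lra)). fold k in Hxk.
  assert (f1 xi * (c' + 2 / k - c') >= k * (2/k)).
  { replace (c' + 2 / k - c') with (2/k) by ring.
    assert (0 < 2/k) by (apply Rdiv_lt_0_compat; lra). nra. }
  replace (k * (2/k)) with 2 in H by (field; lra).
  assert (0 < f c') by (apply Hfpos; unfold c'; lra).
  assert (f (c' + 2/k) <= 1).
  { apply Hfle. assert (0 < 2/k) by (apply Rdiv_lt_0_compat; lra). unfold c'; lra. }
  lra. }
assert (intmax : forall a w z, y0 < a -> a < w < z ->
   (forall t, a <= t <= z -> f t - psi t <= f w - psi w) -> psi w < f w -> False).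
{ intros a w z Ha Hw Hmax Hg.
  assert (H1 : 0 <= f1 w).
  { apply Rnot_lt_le; intro Hn.
    destruct (T1n _ _ _ (Hf w ltac:(lra)) Hn) as [d [Hd Ht]].
    set (t := Rmin d (w - a) / 2).
    assert (0 < Rmin d (w-a)) by (apply Rmin_pos; lra).
    assert (Rmin d (w-a) <= d) by apply Rmin_l.
    assert (Rmin d (w-a) <= w - a) by apply Rmin_r.
    destruct (Ht t ltac:(unfold t; lra)) as [_ Hlt].
    specialize (Hmax (w - t) ltac:(unfold t; lra)).
    assert (psi (w - t) <= psi w) by (apply Hmon; unfold t; lra). lra. }
  assert (H2 : f2 w <= 0).
  { apply Rnot_lt_le; intro Hn.
    destruct (T1 _ _ _ (Hf1 w ltac:(lra)) Hn) as [d [Hd Ht]].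
    set (t := Rmin d (Rmin (w - a) (z - w)) / 2).
    assert (0 < Rmin (w-a) (z-w)) by (apply Rmin_pos; lra).
    assert (0 < Rmin d (Rmin (w-a) (z-w))) by (apply Rmin_pos; lra).
    assert (Rmin d (Rmin (w-a) (z-w)) <= d) by apply Rmin_l.
    assert (Rmin d (Rmin (w-a) (z-w)) <= Rmin (w-a) (z-w)) by apply Rmin_r.
    assert (Rmin (w-a) (z-w) <= w - a) by apply Rmin_l.
    assert (Rmin (w-a) (z-w) <= z - w) by apply Rmin_r.
    assert (Htt : 0 < t < d) by (unfold t; lra).
    assert (t <= w - a) by (unfold t; lra).
    assert (t <= z - w) by (unfold t; lra).
    destruct (mvt w (w + t) ltac:(lra) ltac:(lra)) as [x1 [Hx1 Hx1']].
    destruct (mvt (w - t) w ltac:(lra) ltac:(lra)) as [x2 [Hx2 Hx2']].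
    destruct (Ht (x1 - w) ltac:(lra)) as [Hp _].
    destruct (Ht (w - x2) ltac:(lra)) as [_ Hq].
    replace (w + (x1 - w)) with x1 in Hp by ring.
    replace (w - (w - x2)) with x2 in Hq by ring.
    assert (f (w + t) + f (w - t) - 2 * f w > 0).
    { assert (f1 x1 * (w + t - w) - f1 x2 * (w - (w - t)) > 0).
      { replace (w + t - w) with t by ring. replace (w - (w - t)) with t by ring. nra. }
      lra. }
    assert (Hc := Hconc (w + t) (w - t) (/2) ltac:(lra) ltac:(lra) ltac:(lra)).
    replace (/ 2 * (w + t) + (1 - / 2) * (w - t)) with w in Hc by field.
    assert (Hm1 := Hmax (w + t) ltac:(lra)).
    assert (Hm2 := Hmax (w - t) ltac:(lra)).
    lra. }
  assert (K := KEY w ltac:(lra) Hg H1). lra. }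
assert (Ha : exists a, Y <= a /\ f a <= psi a).
{ apply NNPP; intro Hn. apply (blow Y HY (Rle_refl _)).
  intros y Hy. apply Rnot_le_lt; intro. apply Hn; eauto. }
destruct Ha as [a [HaY Ha]].
exists a. intros y Hy. apply Rnot_lt_le; intro Hgy.
assert (Hya : a < y) by (destruct Hy as [|<-]; auto; lra).
assert (Hz : exists z, y <= z /\ f z <= psi z).
{ apply NNPP; intro Hn. apply (blow y ltac:(lra) ltac:(lra)).
  intros t Ht. apply Rnot_le_lt; intro. apply Hn; eauto. }
destruct Hz as [z [Hz1 Hz2]].
destruct (continuity_ab_maj (fun t => f t - psi t) a z ltac:(lra)) as [w [Hw1 Hw2]].
{ intros c Hc. apply continuity_pt_minus; [apply contf|apply Hpsi]; lra. }
assert (Hwy := Hw1 y ltac:(lra)). simpl in Hwy.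
assert (w <> a) by (intro; subst; lra).
assert (w <> z) by (intro; subst; lra).
apply (intmax a w z ltac:(lra) ltac:(lra)); [|lra].
intros t Ht. apply (Hw1 t Ht).
Qed.
Lemma key_alg (b2 atl d E0 E1 E2 U0 U1 U2 : R) :
  0 < E0 -> 0 < U0 -> 0 < b2 -> 0 <= d ->
  atl / E0 + (b2 - 2 * d) * E1 / E0 ^ 2 <= 0 ->
  0 = / 2 * b2 * U2 + atl * U1 + E0 * U0 - U0 ^ 2 - d * U1 ^ 2 / U0 ->
  1 + (/ 2 * b2 * E2 + atl * E1) / E0 ^ 2 - d * E1 ^ 2 / E0 ^ 3 < U0 / E0 ->
  0 <= (U1 * E0 - U0 * E1) / E0 ^ 2 ->
  0 < ((U2 * E0 - U0 * E2) * E0 - 2 * E1 * (U1 * E0 - U0 * E1)) / E0 ^ 3.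
Proof.
  intros HE HU Hb Hd Hab Hode Hpsi Hf1.
  set (f := U0 / E0) in *.
  set (psi := 1 + (/ 2 * b2 * E2 + atl * E1) / E0 ^ 2 - d * E1 ^ 2 / E0 ^ 3) in *.
  set (f1 := (U1 * E0 - U0 * E1) / E0 ^ 2) in *.
  set (f2 := ((U2 * E0 - U0 * E2) * E0 - 2 * E1 * (U1 * E0 - U0 * E1)) / E0 ^ 3).
  set (ab := atl / E0 + (b2 - 2 * d) * E1 / E0 ^ 2) in *.
  assert (Hid : f * (psi - f) + / 2 * (b2 / E0) * f2 + ab * f1 - (d / E0) * f1 ^ 2 / f
     = (/ 2 * b2 * U2 + atl * U1 + E0 * U0 - U0 ^ 2 - d * U1 ^ 2 / U0) / E0 ^ 2).
  { unfold f, psi, f1, f2, ab. field. lra. }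
  rewrite <- Hode in Hid. replace (0 / E0 ^ 2) with 0 in Hid by (field; lra).
  apply Rnot_le_lt; intro Hf2.
  assert (0 < f) by (unfold f; apply Rdiv_lt_0_compat; lra).
  assert (f * (psi - f) < 0) by nra.
  assert (0 < b2 / E0) by (apply Rdiv_lt_0_compat; lra).
  assert (/ 2 * (b2 / E0) * f2 <= 0) by nra.
  assert (ab * f1 <= 0) by nra.
  assert (0 <= d / E0 * f1 ^ 2 / f).
  { apply Rmult_le_pos. apply Rmult_le_pos. apply Rmult_le_pos; [lra|].
    left; apply Rinv_0_lt_compat; lra. nra. left; apply Rinv_0_lt_compat; lra. }
  lra.
Qed.
Lemma derivs (u e : R -> R) y : ex_derive u y -> ex_derive (Derive u) y -> ex_derive e y ->
  ex_derive (Derive e) y -> e y <> 0 ->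
 is_derive (fun t => u t / e t) y ((Derive u y * e y - u y * Derive e y)/ e y ^2) /\
 is_derive (fun t => (Derive u t * e t - u t * Derive e t)/ e t ^2) y
   (((Derive (Derive u) y * e y - u y * Derive (Derive e) y) * e y
      - 2 * Derive e y * (Derive u y * e y - u y * Derive e y)) / e y ^ 3).
Proof.
  intros H1 H2 H3 H4 H5. split.
  - apply is_derive_div; auto; apply Derive_correct; auto.
  - auto_derive.
    + repeat split; auto.
    + change (Derive (fun x : R => Derive u x) y) with (Derive (Derive u) y).
      change (Derive (fun x : R => e x) y) with (Derive e y).
      change (Derive (fun x : R => u x) y) with (Derive u y).
      change (Derive (fun x : R => Derive e x) y) with (Derive (Derive e) y).
      field; auto.
Qed.
Lemma D2 (g : R -> R) y : Derive_n g 2 y = Derive (Derive g) y.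
Proof. reflexivity. Qed.
Lemma inE_open Em y : inE Em y -> exists r, 0 < r /\ forall x, Rabs (x - y) < r -> inE Em x.
Proof.
  destruct Em as [e|]; simpl; intros H.
  - exists (y - e). split; [lra|]. intros x Hx. apply Rabs_def2 in Hx. lra.
  - exists 1. split; auto; lra.
Qed.

Lemma lip_cont Em f y : loc_lipschitz_on Em f -> inE Em y -> continuous f y.
Proof.
  intros Hl Hy. apply continuity_pt_filterlim.
  destruct (inE_open Em y Hy) as [r [Hr Hin]].
  destruct (Hl y Hy) as [eps [L [He HL]]].
  intros e He'. 
  set (c := e / (Rabs L + 1)).
  assert (Hc : 0 < c) by (unfold c; apply Rdiv_lt_0_compat; [lra|]; pose proof (Rabs_pos L); lra).
  exists (Rmin (Rmin eps r) c). split.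
  { apply Rmin_pos; [apply Rmin_pos|]; lra. }
  intros x [_ Hx]. unfold R_dist in *.
  assert (Rmin (Rmin eps r) c <= Rmin eps r) by apply Rmin_l.
  assert (Rmin eps r <= eps) by apply Rmin_l.
  assert (Rmin eps r <= r) by apply Rmin_r.
  assert (Rmin (Rmin eps r) c <= c) by apply Rmin_r.
  change (Rabs (x - y) < Rmin (Rmin eps r) c) in Hx. change (Rabs (f x - f y) < e).
  assert (Hxy := HL x y (Hin x ltac:(lra)) Hy ltac:(lra) ltac:(rewrite Rminus_diag, Rabs_R0; lra)).
  assert (L * Rabs (x - y) <= Rabs L * Rabs (x - y)).
  { apply Rmult_le_compat_r; [apply Rabs_pos| apply RRle_abs]. }
  assert (Rabs (x - y) * (Rabs L + 1) < e).
  { assert (Rabs (x - y) < c) by lra. unfold c in H4.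
    assert (0 < Rabs L + 1) by (pose proof (Rabs_pos L); lra).
    apply Rmult_lt_compat_r with (r := Rabs L + 1) in H4; auto.
    replace (e / (Rabs L + 1) * (Rabs L + 1)) with e in H4 by (field; lra). lra. }
  pose proof (Rabs_pos (x - y)). nra.
Qed.

Lemma cmul (f g : R -> R) x : continuous f x -> continuous g x -> continuous (fun y => f y * g y) x.
Proof. intros; apply (continuous_mult f g); auto. Qed.
Lemma cplus (f g : R -> R) x : continuous f x -> continuous g x -> continuous (fun y => f y + g y) x.
Proof. intros; apply (continuous_plus f g); auto. Qed.
Lemma cminus (f g : R -> R) x : continuous f x -> continuous g x -> continuous (fun y => f y - g y) x.
Proof. intros; apply (continuous_minus f g); auto. Qed.
Lemma cpow (f : R -> R) n x : continuous f x -> continuous (fun y => f y ^ n) x.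
Proof. intros H; induction n; simpl. apply continuous_const. apply cmul; auto. Qed.
Lemma cdiv (f g : R -> R) x : continuous f x -> continuous g x -> g x <> 0 -> continuous (fun y => f y / g y) x.
Proof. intros; apply cmul; auto. apply continuous_Rinv_comp; auto. Qed.
Lemma cconst (c x : R) : continuous (fun _ => c) x.
Proof. apply continuous_const. Qed.

Theorem proposition4p14
  (Em : option R) (r lam sigma a b rho delta : R -> R) (RR : R)
  (Hr : loc_lipschitz_on Em r) (Hlam : loc_lipschitz_on Em lam)
  (Hsigma : loc_lipschitz_on Em sigma) (Ha : loc_lipschitz_on Em a)
  (Hb : loc_lipschitz_on Em b) (Hrho : loc_lipschitz_on Em rho)
  (Hdelta : loc_lipschitz_on Em delta)
  (Hsigma_pos : forall y, inE Em y -> 0 < sigma y)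
  (Hb_ne0 : forall y, inE Em y -> b y <> 0)
  (Hrho_bd : forall y, inE Em y -> -1 <= rho y <= 1)
  (HRpos : 0 < RR) (HR1 : RR <> 1)
  (y0 : R) (Hy0 : inE Em y0)
  (u : R -> R)
  (Hu_pos : forall y, y0 <= y -> 0 < u y)
  (Hu_diff : forall y, y0 <= y -> ex_derive u y /\ ex_derive (Derive u) y)
  (Hu_ode : forall y, y0 <= y ->
     0 = / 2 * (b y) ^ 2 * Derive_n u 2 y
         + atilde RR a rho lam b y * Derive u y
         + eta_fn RR r lam delta y * u y - (u y) ^ 2
         - dfn RR b rho y * (Derive u y) ^ 2 / u y)
  (Hu_lim : is_lim (fun y => u y / eta_fn RR r lam delta y) p_infty 1)
  (Hu_le : eventually_le u (eta_fn RR r lam delta))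
  (Heta_C2 : C2_from (eta_fn RR r lam delta) y0)
  (Heta_pos : forall y, y0 <= y -> 0 < eta_fn RR r lam delta y)
  (Habar : forall y, y0 <= y ->
     atilde RR a rho lam b y / eta_fn RR r lam delta y
     + ((b y) ^ 2 - 2 * dfn RR b rho y) * Derive (eta_fn RR r lam delta) y
         / (eta_fn RR r lam delta y) ^ 2 <= 0)
  (HPsi_incr : nondecreasing_from
     (Psi b (atilde RR a rho lam b) (dfn RR b rho) (eta_fn RR r lam delta)) y0)
  (HPsi_conc : concave_from
     (Psi b (atilde RR a rho lam b) (dfn RR b rho) (eta_fn RR r lam delta)) y0) :
  eventually_le u
    (fun y => eta_fn RR r lam delta y *
       Psi b (atilde RR a rho lam b) (dfn RR b rho) (eta_fn RR r lam delta) y).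
Proof.
  assert (HinE : forall y, y0 <= y -> inE Em y).
  { intros y Hy. destruct Em as [e|]; simpl in *; auto; lra. }
  assert (Hatl : forall y, y0 <= y -> continuous (atilde RR a rho lam b) y).
  { intros y Hy. unfold atilde. apply cplus. apply (lip_cont Em); auto.
    apply cmul; [apply cmul; [apply cmul|]|].
    apply cconst. all: apply (lip_cont Em); auto. }
  assert (Hdd : forall y, y0 <= y -> continuous (dfn RR b rho) y).
  { intros y Hy. unfold dfn. apply cmul; [apply cmul|].
    apply cconst. apply cpow; apply (lip_cont Em); auto.
    apply cplus; [apply cplus|]. apply cmul. apply cminus. apply cconst.
    apply cpow; apply (lip_cont Em); auto. apply cconst.
    apply cpow; apply (lip_cont Em); auto. apply cconst. }
  set (eta := eta_fn RR r lam delta) in *.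
  set (atl := atilde RR a rho lam b) in *.
  set (dd := dfn RR b rho) in *.
  set (psi := Psi b atl dd eta) in *.
  destruct Hu_le as [Y0 HY0].
  set (Y := Rmax Y0 (y0 + 1)).
  assert (HY1 : Y0 <= Y) by apply Rmax_l.
  assert (HY2 : y0 + 1 <= Y) by apply Rmax_r.
  set (f := fun y => u y / eta y).
  set (f1 := fun y => (Derive u y * eta y - u y * Derive eta y)/ eta y ^2).
  set (f2 := fun y => ((Derive (Derive u) y * eta y - u y * Derive (Derive eta) y) * eta y
      - 2 * Derive eta y * (Derive u y * eta y - u y * Derive eta y)) / eta y ^ 3).
  assert (Hder : forall y, y0 < y -> derivable_pt_lim f y (f1 y) /\ derivable_pt_lim f1 y (f2 y)).
  { intros y Hy. destruct (Hu_diff y ltac:(lra)). destruct (Heta_C2 y ltac:(lra)) as [He1 [He2 _]].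
    assert (eta y <> 0) by (apply Rgt_not_eq, Heta_pos; lra).
    destruct (derivs u eta y) as [D1 D2']; auto.
    split; apply is_derive_Reals; auto. }
  destruct (abstract_main y0 Y f f1 f2 psi) as [a0 Ha0].
  - lra.
  - intros y Hy; apply Hder; auto.
  - intros y Hy; apply Hder; auto.
  - intros y Hy. apply continuity_pt_filterlim.
    assert (eta y <> 0) by (apply Rgt_not_eq, Heta_pos; lra).
    destruct (Heta_C2 y ltac:(lra)) as [He1 [He2 He3]].
    assert (Ce : continuous eta y) by exact (ex_derive_continuous eta y He1).
    assert (Ce1 : continuous (Derive eta) y) by exact (ex_derive_continuous (Derive eta) y He2).
    assert (Cb : continuous b y) by (apply (lip_cont Em); auto; apply HinE; lra).
    specialize (Hatl y ltac:(lra)). specialize (Hdd y ltac:(lra)).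
    change (continuous psi y). unfold psi, Psi.
    apply cminus; [apply cplus|]. apply cconst.
    apply cdiv. apply cplus. apply cmul. apply cmul. apply cconst. apply cpow; auto. exact He3.
    apply cmul; auto. apply cpow; auto. apply pow_nonzero; auto.
    apply cdiv. apply cmul; auto. apply cpow; auto. apply cpow; auto. apply pow_nonzero; auto.
  - intros y Hy. unfold f. apply Rdiv_lt_0_compat; [apply Hu_pos|apply Heta_pos]; lra.
  - intros y Hy. unfold f. assert (0 < eta y) by (apply Heta_pos; lra).
    assert (u y <= eta y) by (apply HY0; lra).
    apply Rmult_le_reg_r with (eta y); auto. unfold Rdiv. rewrite Rmult_assoc, Rinv_l; lra.
  - intros e He. destruct (Hu_lim (fun x => 1 - e < x)) as [M HM].
    { exists (mkposreal e He). intros x Hx. change (Rabs (x - 1) < e) in Hx.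
      apply Rabs_def2 in Hx; lra. }
    exists M; auto.
  - intros y Hy Hp Hf1. unfold f, f1, f2 in *. unfold psi, Psi in Hp.
    assert (Hby : b y <> 0) by (apply Hb_ne0, HinE; lra).
    assert (Hrb := Hrho_bd y (HinE y ltac:(lra))).
    assert (0 < b y ^ 2) by (pose proof (Rsqr_pos_lt _ Hby); unfold Rsqr in *; simpl; lra).
    assert (0 <= dd y).
    { unfold dd, dfn. apply Rmult_le_pos. lra. assert (rho y ^ 2 <= 1) by nra. assert (0 <= (1 - rho y ^ 2) * RR) by (apply Rmult_le_pos; lra). assert (0 <= rho y ^ 2) by nra. lra. }
    rewrite D2 in Hp. specialize (Hu_ode y ltac:(lra)). rewrite D2 in Hu_ode.
    apply key_alg with (b2 := b y ^ 2) (atl := atl y) (d := dd y); auto.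
    apply Heta_pos; lra. apply Hu_pos; lra. apply Habar; lra.
  - exact HPsi_incr.
  - exact HPsi_conc.
  - exists (Rmax a0 y0). intros y Hy.
    assert (a0 <= y) by (pose proof (Rmax_l a0 y0); lra).
    assert (y0 <= y) by (pose proof (Rmax_r a0 y0); lra).
    specialize (Ha0 y H). unfold f in Ha0.
    assert (0 < eta y) by (apply Heta_pos; lra).
    replace (u y) with (eta y * (u y / eta y)) by (field; lra).
    apply Rmult_le_compat_l; lra.
Qed.
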